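(* Suppose that OnlinePacker (described in the context) has packed n horizontal parallelograms of height 1 and width at most 1. If the total area of the pieces is at least 1, the resulting packing has density Ω(n^{1-log 3}/log n), where log is base 2.
   Context: Setting: online translational strip packing. The strip is a horizontal strip of height 1, bounded on the left by a vertical segment and unbounded to the right. Pieces arrive one at a time, each must be placed by a translation only, interior-disjoint from previously placed pieces, before the next piece is revealed. The occupied part of the strip is the part from its left end to the vertical line through the rightmost point of a placed piece; density is total piece area divided by the area of the occupied part. Here all pieces are horizontal parallelograms (parallelograms with a pair of horizontal edges) of height 1 and width at most 1. Box types: these form an infinite ternary tree. The root, the basic box type, is a 2 x 1 rectangle. A d-dimensional box type is a vector [x_1,...,x_d] in {-1,0,+1}^d and is a horizontal parallelogram of height 1. Given type T with bottom edge b and top edge t, split b into three equal consecutive segments b_{-1}, b_0, b_{+1} and t likewise into t_{-1}, t_0, t_{+1}; the child type T ⊕ [x_{d+1}] is the parallelogram spanned by b_0 and t_{x_{d+1}}. Thus a d-dimensional type has base edges of length 2·3^{-d}. A box type T matches a piece P if P can be packed into T and area(T) ≤ 6·area(P). A type is suitable for P if it is an ancestor (including itself) of a type matching P. Algorithm OnlinePacker: each allocated box of type T contains either a single piece that T matches, or one, two or three boxes whose types are children of T. When a piece P arrives: if there is an allocated box B_1 whose type T_1 is suitable for P (with T_1,...,T_k the tree path from T_1 to a type T_k matching P) and B_1 has room for one more box of type T_2, choose such B_1 of maximum dimension; then for i = 1,...,k-1 allocate in B_i a new box B_{i+1} of type T_{i+1}, as far left in B_i as possible, and place P in B_k. Otherwise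 allocate a new basic box as far left in the strip as possible, call it B_1, and proceed the same way. A d-dimensional box is near-empty if exactly one (d+1)-dimensional box is allocated in it (near-empty boxes may be present here). *)

(* Defs.v *)
From Stdlib Require Import Reals Lra List.
Import ListNotations.
Open Scope R_scope.

(* Geometry.  The strip is [0, +oo) x [0,1].  Every object we handle is *)
(* a horizontal parallelogram of height 1 lying in the strip, hence it  *)
(* spans the full height [0,1] and is determined by its bottom-left x   *)
(* coordinate [pleft], the length [plen] of its two horizontal edges,   *)
(* and its shear [pshear] (top-left x minus bottom-left x):             *)
(*   bottom edge [pleft, pleft+plen] x {0},                             *)
(*   top edge    [pleft+pshear, pleft+pshear+plen] x {1}.               *)
Record para := mkPara { pleft : R; plen : R; pshear : R }.

Definition in_region (A : para) (x y : R) : Prop :=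
  0 <= y <= 1 /\
  pleft A + y * pshear A <= x <= pleft A + y * pshear A + plen A.

Definition in_interior (A : para) (x y : R) : Prop :=
  0 < y < 1 /\
  pleft A + y * pshear A < x < pleft A + y * pshear A + plen A.

Definition contained (A B : para) : Prop :=
  forall x y, in_region A x y -> in_region B x y.

Definition int_disjoint (A B : para) : Prop :=
  forall x y, ~ (in_interior A x y /\ in_interior B x y).

Definition in_strip (A : para) : Prop :=
  forall x y, in_region A x y -> 0 <= x.

Definition rightmost (A : para) : R := pleft A + plen A + Rmax 0 (pshear A).

(* Pieces: horizontal parallelograms of height 1 (given up to           *)
(* translation), width (= horizontal extent) at most 1.                 *)
Record piece := mkPiece { wlen : R; wshear : R }.

Definition piece_width (P : piece) : R := wlen P + Rabs (wshear P).
Definition admissible (P : piece) : Prop := 0 < wlen P /\ piece_width P <= 1.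
Definition piece_area (P : piece) : R := wlen P. (* height 1 *)

Definition piece_at (P : piece) (q : R) : para := mkPara q (wlen P) (wshear P).

Inductive sgn := SM | S0 | SP.
Definition sval (s : sgn) : R := match s with SM => -1 | S0 => 0 | SP => 1 end.
Definition btype := list sgn.

(* (base edge length, shear) of a type: the root is a 2 x 1 rectangle;
   the child T (+) [x] is spanned by the middle third b_0 of the bottom
   edge of T and the third t_x of its top edge. *)
Definition type_geom (T : btype) : R * R :=
  fold_left (fun (Ls : R * R) (x : sgn) =>
               let (L, s) := Ls in (L / 3, s + (sval x + 1) * (L / 3) - L / 3))
            T (2, 0).

Definition type_at (T : btype) (t : R) : para :=
  mkPara t (fst (type_geom T)) (snd (type_geom T)).

Definition type_area (T : btype) : R := fst (type_geom T). (* height 1 *)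

Definition matches (T : btype) (P : piece) : Prop :=
  (exists q, contained (piece_at P q) (type_at T 0)) /\
  type_area T <= 6 * piece_area P.

Record box := mkBox { bty : btype; bpos : R; bparent : option nat }.

Record state := mkState {
  boxes : list box;                    (* allocated boxes, by index *)
  placed : list (piece * R * nat)      (* piece, x-offset, index of its box *)
}.

Definition empty_state : state := mkState [] [].

Definition box_region (B : box) : para := type_at (bty B) (bpos B).

Definition has_piece (st : state) (i : nat) : Prop :=
  exists e, In e (placed st) /\ snd e = i.

Definition child_ok (st : state) (i : nat) (T : btype) (t : R) : Prop :=
  exists B, nth_error (boxes st) i = Some B /\
    contained (type_at T t) (box_region B) /\
    forall c, In c (boxes st) -> bparent c = Some i ->
      int_disjoint (type_at T t) (box_region c).

Definition room (st : state) (i : nat) (T : btype) : Prop :=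
  ~ has_piece st i /\ exists t, child_ok st i T t.

Definition basic_ok (st : state) (t : R) : Prop :=
  in_strip (type_at [] t) /\
  forall c, In c (boxes st) -> int_disjoint (type_at [] t) (box_region c).

Definition leftmost (F : R -> Prop) (t : R) : Prop :=
  F t /\ forall t', F t' -> t <= t'.

(* Allocated box i (of type T_1 = bty B) is suitable for P via the path
   T_1, T_2 = T_1 ++ [x], ..., T_k = T_1 ++ x :: ys matching P, and B
   has room for one more box of type T_2. *)
Definition candidate (st : state) (P : piece) (i : nat) (x : sgn) (ys : list sgn) : Prop :=
  exists B, nth_error (boxes st) i = Some B /\
    matches (bty B ++ x :: ys) P /\ room st i (bty B ++ [x]).

Definition dim_of (st : state) (i : nat) : nat :=
  match nth_error (boxes st) i with Some B => length (bty B) | None => 0%nat end.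

Inductive build : state -> nat -> list sgn -> piece -> state -> Prop :=
| build_place : forall st i B P q,
    nth_error (boxes st) i = Some B ->
    contained (piece_at P q) (box_region B) ->
    build st i [] P (mkState (boxes st) (placed st ++ [(P, q, i)]))
| build_box : forall st i B x xs P t st',
    nth_error (boxes st) i = Some B ->
    leftmost (child_ok st i (bty B ++ [x])) t ->
    build (mkState (boxes st ++ [mkBox (bty B ++ [x]) t (Some i)]) (placed st))
          (length (boxes st)) xs P st' ->
    build st i (x :: xs) P st'.

(* One step of OnlinePacker (all tie-breaks allowed). *)
Inductive step : state -> piece -> state -> Prop :=
| step_existing : forall st P i x ys st',
    candidate st P i x ys ->
    (forall j y zs, candidate st P j y zs -> (dim_of st j <= dim_of st i)%nat) ->
    build st i (x :: ys) P st' ->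
    step st P st'
| step_new : forall st P t xs st',
    (~ exists j y zs, candidate st P j y zs) ->
    leftmost (basic_ok st) t ->
    matches xs P ->
    build (mkState (boxes st ++ [mkBox [] t None]) (placed st))
          (length (boxes st)) xs P st' ->
    step st P st'.

Inductive runs : list piece -> state -> Prop :=
| runs_nil : runs [] empty_state
| runs_snoc : forall Ps P st st',
    runs Ps st -> step st P st' -> runs (Ps ++ [P]) st'.

Definition total_area (Ps : list piece) : R :=
  fold_right Rplus 0 (map piece_area Ps).

Definition occupied_length (st : state) : R :=
  fold_right Rmax 0
    (map (fun e : piece * R * nat => let '(P, q, _) := e in rightmost (piece_at P q))
         (placed st)).

Definition density (st : state) : R :=
  fold_right Rplus 0
    (map (fun e : piece * R * nat => let '(P, _, _) := e in piece_area P) (placed st))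
  / (occupied_length st * 1).

Definition log2 (x : R) : R := ln x / ln 2.

(* Main.v *)
Require Import Defs.
From Stdlib Require Import Reals List Lia Lra Psatz Bool Arith Wf_nat.
Import ListNotations.
Open Scope R_scope.

Lemma contained_char (A B : para) : 0 <= plen A ->
  (contained A B <-> (pleft B <= pleft A /\ pleft A + plen A <= pleft B + plen B /\
     pleft B + pshear B <= pleft A + pshear A /\
     pleft A + pshear A + plen A <= pleft B + pshear B + plen B)).
Proof.
  destruct A as [a l s], B as [b L S]; simpl; intros Hl; split.
  - intros H; unfold contained, in_region in H; simpl in H.
    destruct (H a 0 ltac:(split; lra)) as [_ H1].
    destruct (H (a+l) 0 ltac:(split; lra)) as [_ H2].
    destruct (H (a+s) 1 ltac:(split; lra)) as [_ H3].
    destruct (H (a+s+l) 1 ltac:(split; lra)) as [_ H4].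
    lra.
  - intros [h1 [h2 [h3 h4]]] x y [Hy Hx]; cbn in *; split; [lra|].
    assert (0 <= y*((a+s)-(b+S))) by (apply Rmult_le_pos; lra).
    assert (0 <= (1-y)*(a-b)) by (apply Rmult_le_pos; lra).
    assert (0 <= y*((b+S+L)-(a+s+l))) by (apply Rmult_le_pos; lra).
    assert (0 <= (1-y)*((b+L)-(a+l))) by (apply Rmult_le_pos; lra).
    assert (a + y*s - (b + y*S) = y*((a+s)-(b+S)) + (1-y)*(a-b)) by ring.
    assert (b + y*S + L - (a + y*s + l) = y*((b+S+L)-(a+s+l)) + (1-y)*((b+L)-(a+l))) by ring.
    cbn in *. lra.
Qed.

Lemma int_disj_shift u l s : int_disjoint (mkPara u l s) (mkPara (u+l) l s).
Proof. intros x y [[_ H1] [_ H2]]; simpl in *; lra. Qed.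

Lemma type_geom_snoc T x : type_geom (T ++ [x]) =
  (fst (type_geom T) / 3, snd (type_geom T) + sval x * (fst (type_geom T) / 3)).
Proof.
  unfold type_geom; rewrite fold_left_app; simpl.
  destruct (fold_left _ T (2,0)) as [L s]; simpl. f_equal; ring.
Qed.

Lemma type_len T : fst (type_geom T) = 2 / 3 ^ length T.
Proof.
  induction T as [|x T IH] using rev_ind.
  - simpl. field.
  - rewrite type_geom_snoc, length_app; simpl. rewrite IH.
    rewrite Nat.add_1_r, <- tech_pow_Rmult. field. apply pow_nonzero; lra.
Qed.

Lemma type_len_pos T : 0 < fst (type_geom T).
Proof. rewrite type_len. apply Rdiv_lt_0_compat; [lra|apply pow_lt; lra]. Qed.

Lemma room_geom (p : R) (T : btype) (x : sgn) (u : R) :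
  contained (type_at (T ++ [x]) u) (type_at T p) ->
  (forall t, contained (type_at (T ++ [x]) t) (type_at T p) -> u <= t) ->
  contained (type_at (T ++ [x]) (u + fst (type_geom T)/3)) (type_at T p).
Proof.
  intros H1 H2.
  pose proof (type_len_pos T) as HL.
  unfold type_at in *. rewrite type_geom_snoc in *. simpl in *.
  set (L := fst (type_geom T)) in *. set (S := snd (type_geom T)) in *.
  apply contained_char in H1; simpl in *; [|lra].
  apply contained_char; simpl; [lra|].
  destruct x; simpl in *.
  - assert (u <= p + L/3). { apply H2. apply contained_char; simpl; lra. } lra.
  - assert (u <= p). { apply H2. apply contained_char; simpl; lra. } lra.
  - assert (u <= p). { apply H2. apply contained_char; simpl; lra. } lra.
Qed.

Lemma rightmost_in (A : para) : 0 <= plen A -> exists y, in_region A (rightmost A) y.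
Proof.
  intros Hl. unfold rightmost, in_region. destruct (Rle_dec 0 (pshear A)).
  - exists 1. rewrite Rmax_right by lra. lra.
  - exists 0. rewrite Rmax_left by lra. lra.
Qed.


Definition dflt : box := mkBox [] 0 None.
Definition bx (bs : list box) (i : nat) : box := nth i bs dflt.
Definition isch (o : option nat) (i : nat) : bool :=
  match o with Some p => Nat.eqb p i | None => false end.
Definition indb (b : bool) : nat := if b then 1%nat else 0%nat.
Fixpoint sm {A} (f : A -> nat) (l : list A) : nat :=
  match l with [] => 0%nat | a :: l => (f a + sm f l)%nat end.
Definition ch (bs : list box) (i : nat) : nat :=
  sm (fun c => indb (isch (bparent (bx bs c)) i)) (seq 0 (length bs)).
Definition dep (bs : list box) (i : nat) : nat := length (bty (bx bs i)).
Definition NN (bs : list box) (j : nat) : nat :=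
  sm (fun i => indb (Nat.eqb (dep bs i) j)) (seq 0 (length bs)).

Lemma sm_app {A} (f : A -> nat) l1 l2 : sm f (l1 ++ l2) = (sm f l1 + sm f l2)%nat.
Proof. induction l1; simpl; lia. Qed.

Lemma sm_ext {A} (f g : A -> nat) l : (forall x, In x l -> f x = g x) -> sm f l = sm g l.
Proof. induction l; simpl; intros H; [reflexivity|]. rewrite (H a), IHl; auto. Qed.

Lemma sm_le {A} (f g : A -> nat) l : (forall x, In x l -> (f x <= g x)%nat) -> (sm f l <= sm g l)%nat.
Proof. induction l; simpl; intros H; auto. specialize (IHl (fun x h => H x (or_intror h))).
  specialize (H a (or_introl eq_refl)). lia. Qed.

Lemma sm_plus {A} (f g : A -> nat) l : sm (fun x => f x + g x)%nat l = (sm f l + sm g l)%nat.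
Proof. induction l; simpl; lia. Qed.

Lemma sm_mul {A} (f : A -> nat) c l : sm (fun x => c * f x)%nat l = (c * sm f l)%nat.
Proof. induction l; simpl; lia. Qed.

Lemma sm_const {A} c (l : list A) : sm (fun _ => c) l = (c * length l)%nat.
Proof. induction l; simpl; lia. Qed.

Lemma sm_ge {A} (f : A -> nat) l x : In x l -> (f x <= sm f l)%nat.
Proof. induction l; simpl; [tauto|]. intros [H|H]; subst; try lia. specialize (IHl H); lia. Qed.

Lemma sm_ind_filter {A} (f : A -> bool) l : sm (fun x => indb (f x)) l = length (filter f l).
Proof. induction l; simpl; auto. destruct (f a); simpl; lia. Qed.

Lemma sm_swap {A B} (f : A -> B -> nat) la lb :
  sm (fun a => sm (fun b => f a b) lb) la = sm (fun b => sm (fun a => f a b) la) lb.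
Proof.
  induction la; simpl.
  - induction lb; simpl; auto.
  - rewrite IHla. rewrite <- sm_plus. reflexivity.
Qed.

Lemma sm_zero {A} (f : A -> nat) l : (forall x, In x l -> f x = 0%nat) -> sm f l = 0%nat.
Proof. intros H. rewrite (sm_ext f (fun _ => 0%nat)) by auto. rewrite sm_const; lia. Qed.

Lemma bx_app_lt bs b i : (i < length bs)%nat -> bx (bs ++ [b]) i = bx bs i.
Proof. intros; unfold bx; apply app_nth1; auto. Qed.

Lemma bx_app_eq bs b : bx (bs ++ [b]) (length bs) = b.
Proof. unfold bx. rewrite app_nth2 by lia. rewrite Nat.sub_diag. reflexivity. Qed.

Lemma sm_seq_app (f g : nat -> nat) bs (b : box) :
  (forall i, (i < length bs)%nat -> f i = g i) ->
  sm f (seq 0 (length (bs ++ [b]))) = (sm g (seq 0 (length bs)) + f (length bs))%nat.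
Proof.
  intros H. rewrite length_app; simpl. rewrite Nat.add_1_r, seq_S, sm_app; simpl.
  rewrite (sm_ext f g); [lia|]. intros x Hx; apply in_seq in Hx; apply H; lia.
Qed.

Lemma ch_app bs b i : ch (bs ++ [b]) i = (ch bs i + indb (isch (bparent b) i))%nat.
Proof.
  unfold ch. rewrite (sm_seq_app _ (fun c => indb (isch (bparent (bx bs c)) i))).
  - rewrite bx_app_eq. reflexivity.
  - intros; rewrite bx_app_lt; auto.
Qed.

Lemma NN_app bs b j : NN (bs ++ [b]) j = (NN bs j + indb (Nat.eqb (length (bty b)) j))%nat.
Proof.
  unfold NN, dep. rewrite (sm_seq_app _ (fun i => indb (Nat.eqb (length (bty (bx bs i))) j))).
  - rewrite bx_app_eq. reflexivity.
  - intros; rewrite bx_app_lt; auto.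
Qed.

Lemma ch_pos bs i c : (c < length bs)%nat -> bparent (bx bs c) = Some i -> (1 <= ch bs i)%nat.
Proof.
  intros Hc Hp. unfold ch.
  eapply Nat.le_trans; [|apply (sm_ge _ _ c); apply in_seq; lia].
  cbv beta. rewrite Hp; simpl. rewrite Nat.eqb_refl; simpl; lia.
Qed.

Lemma ch_one_uniq bs i c1 c2 : ch bs i = 1%nat ->
  (c1 < length bs)%nat -> (c2 < length bs)%nat ->
  bparent (bx bs c1) = Some i -> bparent (bx bs c2) = Some i -> c1 = c2.
Proof.
  intros H1 Hc1 Hc2 P1 P2. destruct (Nat.eq_dec c1 c2) as [|Hne]; auto. exfalso.
  unfold ch in H1. rewrite sm_ind_filter in H1.
  assert (Hl : (length [c1; c2] <= length (filter (fun c => isch (bparent (bx bs c)) i) (seq 0 (length bs))))%nat).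
  { apply NoDup_incl_length.
    - constructor; [simpl; intros [H|[]]; auto|constructor; [simpl; auto|constructor]].
    - intros x [Hx|[Hx|[]]]; subst; apply filter_In; split; try (apply in_seq; lia).
      + rewrite P1; simpl; apply Nat.eqb_refl.
      + rewrite P2; simpl; apply Nat.eqb_refl. }
  simpl in Hl; lia.
Qed.


Record Inv (bs : list box) (pl : list (piece * R * nat)) : Prop := {
 iT : forall i, (i < length bs)%nat ->
   match bparent (bx bs i) with
   | None => bty (bx bs i) = []
   | Some p => (p < i)%nat /\ (exists x, bty (bx bs i) = bty (bx bs p) ++ [x]) /\
               contained (box_region (bx bs i)) (box_region (bx bs p))
   end;
 iFC : forall i p, (i < length bs)%nat -> bparent (bx bs i) = Some p ->
   (forall c, (c < i)%nat -> bparent (bx bs c) <> Some p) ->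
   forall t, contained (type_at (bty (bx bs i)) t) (box_region (bx bs p)) -> bpos (bx bs i) <= t;
 iRG : forall i x y, (i < length bs)%nat -> in_region (box_region (bx bs i)) x y ->
   0 <= x /\ x <= 2 * INR (NN bs 0);
 iPC : forall P q i, In (P, q, i) pl -> (i < length bs)%nat /\
   contained (piece_at P q) (box_region (bx bs i)) /\
   type_area (bty (bx bs i)) <= 6 * piece_area P /\ ch bs i = 0%nat;
 iND : NoDup (map snd pl);
 iNE : forall i1 i2 c1 c2, (c1 < length bs)%nat -> (c2 < length bs)%nat ->
   ch bs i1 = 1%nat -> ch bs i2 = 1%nat ->
   bparent (bx bs c1) = Some i1 -> bparent (bx bs c2) = Some i2 ->
   bty (bx bs c1) = bty (bx bs c2) -> i1 = i2 }.

Definition Full (bs : list box) (pl : list (piece * R * nat)) (ex : nat) : Prop :=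
  forall j, (j < length bs)%nat -> j <> ex -> (1 <= ch bs j)%nat \/ In j (map snd pl).

Definition Safe (bs : list box) (i : nat) (path : list sgn) : Prop :=
  forall pre x rest, path = pre ++ x :: rest -> (pre = [] -> ch bs i = 0%nat) ->
  forall i2 c2, (c2 < length bs)%nat -> ch bs i2 = 1%nat -> bparent (bx bs c2) = Some i2 ->
  bty (bx bs c2) <> bty (bx bs i) ++ pre ++ [x].

Lemma ch_new bs pl : Inv bs pl -> ch bs (length bs) = 0%nat.
Proof.
  intros I. unfold ch. apply sm_zero. intros c Hc. apply in_seq in Hc.
  pose proof (iT _ _ I c ltac:(lia)) as H.
  destruct (bparent (bx bs c)) as [p|]; simpl; auto.
  destruct H as [Hp _]. destruct (Nat.eqb_spec p (length bs)); simpl; auto; lia.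
Qed.

Lemma nth_error_bx bs i B : nth_error bs i = Some B -> (i < length bs)%nat /\ B = bx bs i.
Proof.
  intros H. split.
  - apply nth_error_Some. congruence.
  - unfold bx. symmetry. apply nth_error_nth. auto.
Qed.

Lemma In_bx bs c : In c bs -> exists k, (k < length bs)%nat /\ bx bs k = c.
Proof. intros H. apply (In_nth _ _ dflt) in H. exact H. Qed.


Lemma ch_app_par bs b i j : bparent b = Some i ->
  ch (bs ++ [b]) j = (ch bs j + (if Nat.eq_dec i j then 1 else 0))%nat.
Proof.
  intros Hb. rewrite ch_app, Hb. simpl. destruct (Nat.eq_dec i j); subst.
  - rewrite Nat.eqb_refl; reflexivity.
  - apply Nat.eqb_neq in n. rewrite n; reflexivity.
Qed.

Lemma build_ok st i path P st' : build st i path P st' ->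
  Inv (boxes st) (placed st) -> (i < length (boxes st))%nat ->
  ~ In i (map snd (placed st)) ->
  (path = [] -> ch (boxes st) i = 0%nat) ->
  Full (boxes st) (placed st) i -> Safe (boxes st) i path ->
  matches (bty (bx (boxes st) i) ++ path) P ->
  Inv (boxes st') (placed st') /\ Full (boxes st') (placed st') (length (boxes st')) /\
  exists q j, placed st' = placed st ++ [(P, q, j)].
Proof.
  intros H. induction H as [st i B P q Hnth Hc | st i B x xs P t st' Hnth Hlm Hb IH];
    intros I Hi Hnp Hch0 Hfull Hsafe Hm.
  -
    destruct (nth_error_bx _ _ _ Hnth) as [_ HB]. subst B. simpl.
    specialize (Hch0 eq_refl).
    split; [|split].
    + destruct I as [I1 I2 I3 I4 I5 I6]. constructor; auto.
      * intros P' q' i' Hin. apply in_app_or in Hin. destruct Hin as [Hin|[Hin|[]]].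
        -- apply I4; auto.
        -- inversion Hin; subst. split; [auto|split; [auto|split; [|auto]]].
           destruct Hm as [_ Hm]. rewrite app_nil_r in Hm. exact Hm.
      * rewrite map_app. apply NoDup_app; auto.
        -- repeat constructor. simpl; tauto.
        -- simpl. intros a Ha [Hb|[]]. subst. apply Hnp. exact Ha.
    + intros j Hj _. rewrite map_app, in_app_iff. simpl.
      destruct (Nat.eq_dec j i) as [->|Hne]; [right; right; left; reflexivity|].
      destruct (Hfull j Hj Hne) as [h|h]; auto.
    + exists q, i. reflexivity.
  -
    destruct (nth_error_bx _ _ _ Hnth) as [_ HB]. subst B.
    set (bs := boxes st) in *. set (pl := placed st) in *.
    set (nbx := mkBox (bty (bx bs i) ++ [x]) t (Some i)) in *.
    assert (Hchn : ch bs (length bs) = 0%nat) by (eapply ch_new; eauto).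
    assert (Hch : forall j, ch (bs ++ [nbx]) j = (ch bs j + (if Nat.eq_dec i j then 1 else 0))%nat)
      by (intros; apply ch_app_par; reflexivity).
    assert (HNN : NN (bs ++ [nbx]) 0 = NN bs 0).
    { rewrite NN_app. simpl. rewrite length_app. simpl.
      rewrite Nat.add_1_r. simpl. lia. }
    assert (Hlen : length (bs ++ [nbx]) = S (length bs)) by (rewrite length_app; simpl; lia).
    destruct Hlm as [Hok Hmin].
    destruct Hok as [B' [HB' [Hcont _]]]. fold bs in HB'. rewrite Hnth in HB'. injection HB' as <-.
    assert (Hpl : forall j, In j (map snd pl) -> (j < length bs)%nat).
    { intros j Hj. apply in_map_iff in Hj. destruct Hj as [[[P' q'] j'] [Hj1 Hj2]].
      simpl in Hj1. subst j'. eapply iPC; eauto. }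
    assert (Hold1 : forall i2 c2, (c2 < length bs)%nat -> bparent (bx bs c2) = Some i2 ->
                     ch (bs ++ [nbx]) i2 = 1%nat -> i2 <> i /\ ch bs i2 = 1%nat).
    { intros i2 c2 Hc2 Hp2 H1. pose proof (ch_pos _ _ _ Hc2 Hp2).
      rewrite Hch in H1. destruct (Nat.eq_dec i i2); [lia|]. split; [auto|lia]. }
    assert (Inv1 : Inv (bs ++ [nbx]) pl).
    { destruct I as [I1 I2 I3 I4 I5 I6]. constructor.
      - intros i' Hi'. rewrite Hlen in Hi'.
        destruct (Nat.eq_dec i' (length bs)) as [->|Hne].
        + rewrite bx_app_eq. simpl. rewrite bx_app_lt by auto.
          split; [auto|split; [eexists; reflexivity|exact Hcont]].
        + rewrite bx_app_lt by lia. specialize (I1 i' ltac:(lia)).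
          destruct (bparent (bx bs i')) as [p|]; auto.
          destruct I1 as [Hp rest]. rewrite bx_app_lt by lia. auto.
      - intros i' p Hi' Hp Hfc t' Ht'. rewrite Hlen in Hi'.
        destruct (Nat.eq_dec i' (length bs)) as [->|Hne].
        + rewrite bx_app_eq in *. simpl in *. injection Hp as <-.
          rewrite bx_app_lt in Ht' by auto.
          apply Hmin. exists (bx bs i). split; [exact Hnth|split; [exact Ht'|]].
          intros c Hcin Hcp. destruct (In_bx _ _ Hcin) as [k [Hk Hkc]]. subst c.
          exfalso. apply (Hfc k Hk). rewrite bx_app_lt by auto. exact Hcp.
        + rewrite bx_app_lt in * by lia.
          pose proof (I1 i' ltac:(lia)) as T1. rewrite Hp in T1. destruct T1 as [Hpi _].
          rewrite bx_app_lt in Ht' by lia.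
          apply (I2 i' p); auto; try lia.
          intros c Hc. specialize (Hfc c Hc). rewrite bx_app_lt in Hfc by lia. exact Hfc.
      - intros i' x0 y0 Hi' Hr. rewrite HNN. rewrite Hlen in Hi'.
        destruct (Nat.eq_dec i' (length bs)) as [->|Hne].
        + rewrite bx_app_eq in Hr. apply (I3 i x0 y0 Hi). apply Hcont. exact Hr.
        + rewrite bx_app_lt in Hr by lia. apply (I3 i' x0 y0); auto; lia.
      - intros P' q' i' Hin. destruct (I4 _ _ _ Hin) as [h1 [h2 [h3 h4]]].
        rewrite Hlen, bx_app_lt by auto. split; [lia|split; [auto|split; [auto|]]].
        rewrite Hch, h4. destruct (Nat.eq_dec i i'); auto. subst.
        exfalso. apply Hnp. apply in_map_iff. exists (P', q', i'). auto.
      - exact I5.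
      - intros i1 i2 c1 c2 Hc1 Hc2 H1 H2 Hp1 Hp2 Hty. rewrite Hlen in Hc1, Hc2.
        assert (Hmix : forall i2 c2, (c2 < length bs)%nat -> ch (bs ++ [nbx]) i = 1%nat ->
                  ch (bs ++ [nbx]) i2 = 1%nat -> bparent (bx bs c2) = Some i2 ->
                  bty (bx bs c2) <> bty (bx bs i) ++ [x]).
        { intros i3 c3 Hc3 Hi3 H3 Hp3. destruct (Hold1 _ _ Hc3 Hp3 H3) as [Hne3 H3'].
          rewrite Hch in Hi3. destruct (Nat.eq_dec i i); [|congruence].
          apply (Hsafe [] x xs eq_refl (fun _ => ltac:(lia)) i3 c3); auto; lia. }
        destruct (Nat.eq_dec c1 (length bs)) as [->|Hn1];
        destruct (Nat.eq_dec c2 (length bs)) as [->|Hn2].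
        + rewrite Hp1 in Hp2. congruence.
        + rewrite bx_app_eq in Hp1, Hty. simpl in Hp1. injection Hp1 as <-.
          rewrite bx_app_lt in Hp2, Hty by lia. simpl in Hty.
          exfalso. apply (Hmix i2 c2 ltac:(lia) H1 H2 Hp2). auto.
        + rewrite bx_app_eq in Hp2, Hty. simpl in Hp2. injection Hp2 as <-.
          rewrite bx_app_lt in Hp1, Hty by lia. simpl in Hty.
          exfalso. apply (Hmix i1 c1 ltac:(lia) H2 H1 Hp1). auto.
        + rewrite bx_app_lt in Hp1, Hp2, Hty by lia.
          destruct (Hold1 i1 c1 ltac:(lia) Hp1 H1) as [_ H1'].
          destruct (Hold1 i2 c2 ltac:(lia) Hp2 H2) as [_ H2'].
          apply (I6 i1 i2 c1 c2); auto; try lia. rewrite (bx_app_lt bs nbx c2) in Hty by lia. exact Hty. }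
    assert (Hbty : bty (bx (bs ++ [nbx]) (length bs)) = bty (bx bs i) ++ [x])
      by (rewrite bx_app_eq; reflexivity).
    specialize (IH Inv1). simpl in IH. fold bs pl in IH.
    apply IH.
    + rewrite Hlen; lia.
    + intros h. apply Hpl in h. lia.
    + intros _. rewrite Hch, Hchn. destruct (Nat.eq_dec i (length bs)); lia.
    + intros j Hj Hne. rewrite Hlen in Hj. rewrite Hch.
      destruct (Nat.eq_dec i j); [left; lia|].
      destruct (Hfull j ltac:(lia) ltac:(auto)) as [h|h]; [left; lia|right; auto].
    + intros pre x' rest Hxs _ i2 c2 Hc2 H2 Hp2. rewrite Hbty. rewrite Hlen in Hc2.
      destruct (Nat.eq_dec c2 (length bs)) as [->|Hn2].
      * rewrite bx_app_eq. simpl. intros Heq. apply (f_equal (@length sgn)) in Heq.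
        rewrite !length_app in Heq. simpl in Heq. lia.
      * rewrite bx_app_lt in Hp2 |- * by lia.
        destruct (Hold1 i2 c2 ltac:(lia) Hp2 H2) as [_ H2'].
        rewrite <- app_assoc. simpl.
        apply (Hsafe (x :: pre) x' rest (f_equal (cons x) Hxs) ltac:(discriminate) i2 c2); auto; lia.
    + rewrite Hbty, <- app_assoc. exact Hm.
Qed.

Lemma int_disjoint_sym A B : int_disjoint A B -> int_disjoint B A.
Proof. intros H x y [h1 h2]. apply (H x y). auto. Qed.

Lemma room_lemma st i2 c2 : Inv (boxes st) (placed st) ->
  (c2 < length (boxes st))%nat -> bparent (bx (boxes st) c2) = Some i2 ->
  ch (boxes st) i2 = 1%nat ->
  exists t, child_ok st i2 (bty (bx (boxes st) c2)) t.
Proof.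
  intros I Hc2 Hp2 H1. set (bs := boxes st) in *.
  pose proof (iT _ _ I c2 Hc2) as T. rewrite Hp2 in T.
  destruct T as [Hlt [[s Hs] Hcont]].
  assert (Hfc : forall c, (c < c2)%nat -> bparent (bx bs c) <> Some i2).
  { intros c Hc Hpc. assert (c = c2) by (apply (ch_one_uniq bs i2 c c2); auto; lia). lia. }
  pose proof (iFC _ _ I c2 i2 Hc2 Hp2 Hfc) as Hmin.
  unfold box_region in Hcont, Hmin. rewrite Hs in Hcont, Hmin.
  pose proof (room_geom (bpos (bx bs i2)) (bty (bx bs i2)) s (bpos (bx bs c2)) Hcont Hmin) as Hr.
  exists (bpos (bx bs c2) + fst (type_geom (bty (bx bs i2))) / 3).
  exists (bx bs i2). split; [apply nth_error_nth'; lia|]. split.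
  - rewrite Hs. exact Hr.
  - intros c Hcin Hcp. fold bs in Hcin. destruct (In_bx _ _ Hcin) as [k [Hk Hkc]]. subst c.
    assert (k = c2) by (apply (ch_one_uniq bs i2 k c2); auto). subst k.
    unfold box_region, type_at. rewrite Hs, type_geom_snoc. simpl.
    apply int_disjoint_sym, int_disj_shift.
Qed.

Lemma cand_of_ne st P i2 c2 T0 x' rest : Inv (boxes st) (placed st) ->
  (c2 < length (boxes st))%nat -> ch (boxes st) i2 = 1%nat ->
  bparent (bx (boxes st) c2) = Some i2 -> bty (bx (boxes st) c2) = T0 ++ [x'] ->
  matches (T0 ++ x' :: rest) P ->
  candidate st P i2 x' rest /\ dim_of st i2 = length T0.
Proof.
  intros I Hc2 H1 Hp2 Hty Hm.
  pose proof (iT _ _ I c2 Hc2) as T. rewrite Hp2 in T.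
  destruct T as [Hlt [[s Hs] Hcont]]. rewrite Hty in Hs.
  apply app_inj_tail in Hs. destruct Hs as [HT Hx]. subst x'.
  assert (Hn : nth_error (boxes st) i2 = Some (bx (boxes st) i2)) by (apply nth_error_nth'; lia).
  split.
  - exists (bx (boxes st) i2). split; [exact Hn|]. rewrite <- HT. split; [exact Hm|].
    split.
    + intros [e [He1 He2]]. destruct e as [[P' q'] j]. simpl in He2. subst j.
      destruct (iPC _ _ I _ _ _ He1) as [_ [_ [_ h]]]. lia.
    + rewrite <- Hty. eapply room_lemma; eauto.
  - unfold dim_of. rewrite Hn. rewrite HT. reflexivity.
Qed.

Lemma in_interior_region A x y : in_interior A x y -> in_region A x y.
Proof. unfold in_interior, in_region. intros; lra. Qed.

Lemma step_ok st P st' : step st P st' ->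
  Inv (boxes st) (placed st) -> Full (boxes st) (placed st) (length (boxes st)) ->
  Inv (boxes st') (placed st') /\ Full (boxes st') (placed st') (length (boxes st')) /\
  exists q j, placed st' = placed st ++ [(P, q, j)].
Proof.
  intros H I F. destruct H as [st P i x ys st' Hcand Hmax Hb | st P t xs st' Hnone Hlm Hm Hb].
  - destruct Hcand as [B [Hnth [Hm [Hnp Hroom]]]].
    destruct (nth_error_bx _ _ _ Hnth) as [Hi HB]. subst B.
    assert (Hnp' : ~ In i (map snd (placed st))).
    { intros h. apply Hnp. apply in_map_iff in h. destruct h as [e [h1 h2]]. exists e; auto. }
    assert (Hch : (1 <= ch (boxes st) i)%nat).
    { destruct (F i Hi ltac:(lia)) as [h|h]; [exact h|contradiction]. }
    apply (build_ok _ _ _ _ _ Hb I Hi Hnp').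
    + discriminate.
    + intros j Hj _. apply F; auto; lia.
    + intros pre x' rest Hpath Hpre i2 c2 Hc2 H2 Hp2 Heq.
      destruct pre as [|a pre']; [specialize (Hpre eq_refl); lia|].
      assert (Hm' : matches ((bty (bx (boxes st) i) ++ a :: pre') ++ x' :: rest) P).
      { rewrite <- app_assoc. simpl. simpl in Hpath. rewrite <- Hpath. exact Hm. }
      rewrite app_assoc in Heq.
      destruct (cand_of_ne st P i2 c2 _ x' rest I Hc2 H2 Hp2 Heq Hm') as [Hc Hd].
      specialize (Hmax _ _ _ Hc). rewrite Hd, length_app in Hmax.
      unfold dim_of in Hmax. rewrite Hnth in Hmax. simpl in Hmax. lia.
    + exact Hm.
  - set (bs := boxes st) in *. set (pl := placed st) in *.
    set (b0 := mkBox [] t None).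
    assert (Hlen : length (bs ++ [b0]) = S (length bs)) by (rewrite length_app; simpl; lia).
    assert (Hch : forall j, ch (bs ++ [b0]) j = ch bs j) by (intros; rewrite ch_app; simpl; lia).
    assert (HNN : NN (bs ++ [b0]) 0 = S (NN bs 0)) by (rewrite NN_app; simpl; lia).
    assert (Hpl : forall j, In j (map snd pl) -> (j < length bs)%nat).
    { intros j Hj. apply in_map_iff in Hj. destruct Hj as [[[P' q'] j'] [Hj1 Hj2]].
      simpl in Hj1. subst j'. eapply iPC; eauto. }
    destruct Hlm as [[Hstrip Hdisj] Hmin].
    assert (Ht0 : 0 <= t).
    { apply (Hstrip t 0). unfold in_region, type_at; simpl. lra. }
    assert (Ht1 : t <= 2 * INR (NN bs 0)).
    { apply Hmin. split.
      - intros x0 y0 Hr. unfold in_region, type_at in Hr; simpl in Hr.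
        pose proof (pos_INR (NN bs 0)). lra.
      - intros c Hcin x0 y0 [h1 h2]. destruct (In_bx _ _ Hcin) as [k [Hk Hkc]]. subst c.
        apply in_interior_region in h2.
        destruct (iRG _ _ I k x0 y0 Hk h2) as [_ h3].
        unfold in_interior, type_at in h1; simpl in h1. lra. }
    assert (Inv1 : Inv (bs ++ [b0]) pl).
    { destruct I as [I1 I2 I3 I4 I5 I6]. constructor.
      - intros i' Hi'. rewrite Hlen in Hi'.
        destruct (Nat.eq_dec i' (length bs)) as [->|Hne].
        + rewrite bx_app_eq. reflexivity.
        + rewrite bx_app_lt by lia. specialize (I1 i' ltac:(lia)).
          destruct (bparent (bx bs i')) as [p|]; auto.
          destruct I1 as [Hp rest]. rewrite bx_app_lt by lia. auto.
      - intros i' p Hi' Hp Hfc t' Ht'. rewrite Hlen in Hi'.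
        destruct (Nat.eq_dec i' (length bs)) as [->|Hne].
        + rewrite bx_app_eq in Hp. discriminate.
        + rewrite bx_app_lt in * by lia.
          pose proof (I1 i' ltac:(lia)) as T1. rewrite Hp in T1. destruct T1 as [Hpi _].
          rewrite bx_app_lt in Ht' by lia.
          apply (I2 i' p); auto; try lia.
          intros c Hc. specialize (Hfc c Hc). rewrite bx_app_lt in Hfc by lia. exact Hfc.
      - intros i' x0 y0 Hi' Hr. rewrite HNN, S_INR. rewrite Hlen in Hi'.
        destruct (Nat.eq_dec i' (length bs)) as [->|Hne].
        + rewrite bx_app_eq in Hr. unfold in_region, box_region, type_at in Hr; simpl in Hr. lra.
        + rewrite bx_app_lt in Hr by lia. destruct (I3 i' x0 y0 ltac:(lia) Hr). lra.
      - intros P' q' i' Hin. destruct (I4 _ _ _ Hin) as [h1 [h2 [h3 h4]]].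
        rewrite Hlen, bx_app_lt, Hch by auto. split; [lia|auto].
      - exact I5.
      - intros i1 i2 c1 c2 Hc1 Hc2 H1 H2 Hp1 Hp2 Hty. rewrite Hlen in Hc1, Hc2.
        rewrite Hch in H1, H2.
        destruct (Nat.eq_dec c1 (length bs)) as [->|Hn1];
          [rewrite bx_app_eq in Hp1; discriminate|].
        destruct (Nat.eq_dec c2 (length bs)) as [->|Hn2];
          [rewrite bx_app_eq in Hp2; discriminate|].
        rewrite bx_app_lt in Hp1, Hp2, Hty by lia.
        rewrite (bx_app_lt bs b0 c2) in Hty by lia.
        apply (I6 i1 i2 c1 c2); auto; lia. }
    assert (Hbty : bty (bx (bs ++ [b0]) (length bs)) = []) by (rewrite bx_app_eq; reflexivity).
    refine (build_ok _ _ _ _ _ Hb _ _ _ _ _ _ _); cbn [boxes placed]; fold bs pl b0.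
    + exact Inv1.
    + rewrite Hlen; lia.
    + intros h. apply Hpl in h. lia.
    + intros _. rewrite Hch. eapply ch_new; eauto.
    + intros j Hj Hne. rewrite Hlen in Hj. rewrite Hch. apply F; auto; lia.
    + intros pre x' rest Hxs _ i2 c2 Hc2 H2 Hp2 Heq. rewrite Hlen in Hc2. rewrite Hch in H2.
      destruct (Nat.eq_dec c2 (length bs)) as [->|Hn2];
        [rewrite bx_app_eq in Hp2; discriminate|].
      rewrite bx_app_lt in Hp2, Heq by lia. rewrite Hbty in Heq. simpl in Heq.
      assert (Hm' : matches (pre ++ x' :: rest) P) by (rewrite <- Hxs; exact Hm).
      destruct (cand_of_ne st P i2 c2 pre x' rest I (ltac:(lia) : (c2 < length bs)%nat) H2 Hp2 Heq Hm') as [Hc _].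
      apply Hnone. eauto.
    + rewrite Hbty. exact Hm.
Qed.

Lemma runs_ok Ps st : runs Ps st ->
  Inv (boxes st) (placed st) /\ Full (boxes st) (placed st) (length (boxes st)) /\
  map (fun e => fst (fst e)) (placed st) = Ps.
Proof.
  induction 1 as [|Ps P st st' Hr IH Hs].
  - simpl. split; [|split].
    + constructor; simpl.
      * intros; lia.
      * intros; lia.
      * intros; lia.
      * tauto.
      * constructor.
      * intros; lia.
    + intros j Hj; simpl in Hj; lia.
    + reflexivity.
  - destruct IH as [I [F M]]. destruct (step_ok _ _ _ Hs I F) as [I' [F' [q [j Hp]]]].
    split; [auto|split; [auto|]]. rewrite Hp, map_app, M. reflexivity.
Qed.


Section Count.
Variable bs : list box.
Variable pl : list (piece * R * nat).
Hypothesis I : Inv bs pl.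
Hypothesis F : Full bs pl (length bs).

Let idx := seq 0 (length bs).
Definition EE j := sm (fun i => indb ((Nat.eqb (dep bs i) j) && (Nat.eqb (ch bs i) 1))) (seq 0 (length bs)).
Definition ZZ j := sm (fun i => indb ((Nat.eqb (dep bs i) j) && (Nat.eqb (ch bs i) 0))) (seq 0 (length bs)).
Definition LL j := sm (fun e : piece * R * nat => indb (Nat.eqb (dep bs (snd e)) j)) pl.
Definition GE j := sm (fun e : piece * R * nat => indb (Nat.leb j (dep bs (snd e)))) pl.
Definition SC j := sm (fun i => indb (Nat.eqb (dep bs i) j) * ch bs i)%nat (seq 0 (length bs)).

Lemma dep_child c p : (c < length bs)%nat -> bparent (bx bs c) = Some p -> dep bs c = S (dep bs p).
Proof.
  intros Hc Hp. pose proof (iT _ _ I c Hc) as T. rewrite Hp in T.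
  destruct T as [_ [[x Hx] _]]. unfold dep. rewrite Hx, length_app. simpl. lia.
Qed.

Lemma dep_le i : (i < length bs)%nat -> (dep bs i <= i)%nat.
Proof.
  induction i as [i IH] using lt_wf_ind. intros Hi.
  pose proof (iT _ _ I i Hi) as T. destruct (bparent (bx bs i)) as [p|] eqn:Hp.
  - destruct T as [Hlt _]. rewrite (dep_child i p Hi Hp). specialize (IH p Hlt ltac:(lia)). lia.
  - unfold dep. rewrite T. simpl. lia.
Qed.

Lemma sm_single (g : nat -> nat) p l : NoDup l ->
  (sm (fun i => g i * indb (Nat.eqb p i)) l <= g p)%nat.
Proof.
  induction l as [|a l IH]; simpl; intros Hnd; [lia|].
  inversion Hnd; subst.
  destruct (Nat.eqb_spec p a) as [->|Hne]; simpl.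
  - rewrite sm_zero; [lia|]. intros x Hx. destruct (Nat.eqb_spec a x); subst; [contradiction|]. simpl; lia.
  - specialize (IH H2). lia.
Qed.

Lemma SC_le j : (SC j <= NN bs (S j))%nat.
Proof.
  unfold SC, ch, NN.
  rewrite (sm_ext _ (fun i => sm (fun c => indb (Nat.eqb (dep bs i) j) * indb (isch (bparent (bx bs c)) i)) (seq 0 (length bs)))%nat).
  2:{ intros x _. rewrite <- sm_mul. reflexivity. }
  rewrite sm_swap. apply sm_le. intros c Hc. apply in_seq in Hc.
  destruct (bparent (bx bs c)) as [p|] eqn:Hp.
  - simpl. eapply Nat.le_trans; [apply (sm_single (fun i => indb (Nat.eqb (dep bs i) j))); apply seq_NoDup|].
    rewrite (dep_child c p ltac:(lia) Hp). simpl.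
    destruct (Nat.eqb_spec (dep bs p) j); simpl; lia.
  - simpl. rewrite sm_zero; [lia|]. intros; lia.
Qed.

Lemma sm_map {A B} (f : B -> nat) (g : A -> B) l : sm f (map g l) = sm (fun x => f (g x)) l.
Proof. induction l; simpl; auto. Qed.

Lemma ZZ_le j : (ZZ j <= LL j)%nat.
Proof.
  unfold ZZ, LL. rewrite sm_ind_filter.
  rewrite <- (sm_map (fun i => indb (Nat.eqb (dep bs i) j)) snd), sm_ind_filter.
  apply NoDup_incl_length.
  - apply NoDup_filter, seq_NoDup.
  - intros i Hi. apply filter_In in Hi. destruct Hi as [Hi Hb].
    apply andb_prop in Hb. destruct Hb as [Hb1 Hb2].
    apply Nat.eqb_eq in Hb2. apply in_seq in Hi.
    apply filter_In. split; auto.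
    destruct (F i ltac:(lia) ltac:(lia)) as [h|h]; [lia|exact h].
Qed.

Lemma F1 j : (2 * NN bs j <= NN bs (S j) + EE j + 2 * LL j)%nat.
Proof.
  pose proof (SC_le j). pose proof (ZZ_le j).
  assert (2 * NN bs j <= SC j + EE j + 2 * ZZ j)%nat; [|lia].
  unfold NN, SC, EE, ZZ. rewrite <- !sm_mul, <- !sm_plus. apply sm_le. intros i _.
  destruct (Nat.eqb_spec (dep bs i) j); simpl; [|lia].
  destruct (ch bs i) as [|[|k]]; simpl; lia.
Qed.

Lemma GE_split j : GE j = (LL j + GE (S j))%nat.
Proof.
  unfold GE, LL. rewrite <- sm_plus. apply sm_ext. intros e _.
  destruct (Nat.leb_spec j (dep bs (snd e))); destruct (Nat.eqb_spec (dep bs (snd e)) j);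
    destruct (Nat.leb_spec (S j) (dep bs (snd e))); simpl; lia.
Qed.

Lemma NN_GE j : (NN bs j <= GE j)%nat.
Proof.
  assert (forall m j, (length bs <= j + m)%nat -> (NN bs j <= GE j)%nat) as Hm; [|apply (Hm (length bs)); lia].
  induction m as [|m IH]; intros j0 Hj.
  - unfold NN. rewrite sm_zero; [lia|]. intros i Hi. apply in_seq in Hi.
    pose proof (dep_le i ltac:(lia)). destruct (Nat.eqb_spec (dep bs i) j0); simpl; lia.
  - specialize (IH (S j0) ltac:(lia)). rewrite GE_split.
    pose proof (SC_le j0). pose proof (ZZ_le j0).
    assert (NN bs j0 <= SC j0 + ZZ j0)%nat; [|lia].
    unfold NN, SC, ZZ. rewrite <- sm_plus. apply sm_le. intros i _.
    destruct (Nat.eqb_spec (dep bs i) j0); simpl; [|lia].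
    destruct (ch bs i) as [|k]; simpl; lia.
Qed.

Lemma GE_le j : (GE j <= length pl)%nat.
Proof.
  unfold GE. rewrite <- (Nat.mul_1_l (length pl)), <- sm_const. apply sm_le.
  intros e _. destruct (Nat.leb _ _); simpl; lia.
Qed.

Lemma NN_le j : (NN bs j <= length pl)%nat.
Proof. pose proof (NN_GE j). pose proof (GE_le j). lia. Qed.


Fixpoint all_types (m : nat) : list btype :=
  match m with
  | O => [[]]
  | S m => map (cons Defs.SM) (all_types m) ++ map (cons Defs.S0) (all_types m) ++ map (cons Defs.SP) (all_types m)
  end.

Lemma all_types_len m : length (all_types m) = (3 ^ m)%nat.
Proof. induction m; [reflexivity|]. cbn [all_types]. rewrite !length_app, !length_map. unfold btype in IHm. rewrite IHm. simpl. lia. Qed.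

Lemma all_types_in m T : length T = m -> In T (all_types m).
Proof.
  revert T; induction m; intros T HT; destruct T as [|a T]; simpl in *; try lia; auto.
  injection HT as HT. specialize (IHm T HT).
  rewrite !in_app_iff, !in_map_iff. destruct a; eauto 6.
Qed.

Lemma count_types (l : list btype) m : NoDup l -> (forall T, In T l -> length T = m) ->
  (length l <= 3 ^ m)%nat.
Proof.
  intros Hnd H. rewrite <- all_types_len. apply NoDup_incl_length; auto.
  intros T HT. apply all_types_in. auto.
Qed.

Lemma NoDup_map_on {A B} (f : A -> B) l : NoDup l ->
  (forall a b, In a l -> In b l -> f a = f b -> a = b) -> NoDup (map f l).
Proof.
  induction l as [|a l IH]; simpl; intros Hnd H; constructor.
  - inversion Hnd; subst. intros Hin. apply in_map_iff in Hin. destruct Hin as [b [Hb1 Hb2]].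
    assert (b = a) by (apply H; auto). subst. contradiction.
  - inversion Hnd; subst. apply IH; auto.
Qed.

Definition fc (i : nat) : nat := hd O (filter (fun c => isch (bparent (bx bs c)) i) (seq 0 (length bs))).

Lemma fc_spec i : ch bs i = 1%nat -> (fc i < length bs)%nat /\ bparent (bx bs (fc i)) = Some i.
Proof.
  intros H. unfold ch in H. rewrite sm_ind_filter in H. unfold fc.
  destruct (filter _ _) as [|c [|c' l]] eqn:Hf; simpl in H; try lia. simpl.
  assert (Hin : In c (filter (fun c => isch (bparent (bx bs c)) i) (seq 0 (length bs)))) by (rewrite Hf; simpl; auto).
  apply filter_In in Hin. destruct Hin as [Hin Hb]. apply in_seq in Hin. split; [lia|].
  destruct (bparent (bx bs c)) as [p|]; simpl in Hb; [|discriminate].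
  apply Nat.eqb_eq in Hb. subst. reflexivity.
Qed.

Lemma EE_le j : (EE j <= 3 ^ S j)%nat.
Proof.
  unfold EE. rewrite sm_ind_filter.
  set (Dn := filter _ _).
  rewrite <- (length_map (fun i => bty (bx bs (fc i))) Dn).
  apply count_types.
  - apply NoDup_map_on; [apply NoDup_filter, seq_NoDup|].
    intros a b Ha Hb Hab. unfold Dn in Ha, Hb. apply filter_In in Ha, Hb.
    destruct Ha as [_ Ha], Hb as [_ Hb]. apply andb_prop in Ha, Hb.
    destruct Ha as [_ Ha], Hb as [_ Hb]. apply Nat.eqb_eq in Ha, Hb.
    destruct (fc_spec a Ha) as [h1 h2]. destruct (fc_spec b Hb) as [h3 h4].
    apply (iNE _ _ I a b (fc a) (fc b)); auto.
  - intros T HT. apply in_map_iff in HT. destruct HT as [a [<- Ha]].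
    unfold Dn in Ha. apply filter_In in Ha. destruct Ha as [_ Ha].
    apply andb_prop in Ha. destruct Ha as [Hd Ha]. apply Nat.eqb_eq in Ha, Hd.
    destruct (fc_spec a Ha) as [h1 h2].
    pose proof (dep_child _ _ h1 h2). unfold dep in *. lia.
Qed.

End Count.


Lemma step_real N0 NJ NJ1 E L AA S a b : 0 < b -> 0 < a -> 0 <= AA -> 0 <= S ->
  2 * NJ <= NJ1 + E + 2 * L -> E <= 3 * (a * b) -> L * (2 / (a*b)) <= 6 * AA ->
  N0 <= NJ / b + 3 * (a - 1) + 3 * a * S ->
  N0 <= NJ1 / (2 * b) + 3 * (a * (3/2) - 1) + 3 * (a * (3/2)) * (S + AA).
Proof.
  intros Hb Ha HAA HS H1 H2 H3 IH.
  assert (Hab : 0 < a * b) by (apply Rmult_lt_0_compat; lra).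
  assert (HL : L <= 3 * (a*b) * AA).
  { apply Rmult_le_reg_r with (2 / (a*b)). apply Rdiv_lt_0_compat; lra.
    replace (3 * (a*b) * AA * (2 / (a*b))) with (6 * AA) by (field; lra). exact H3. }
  assert (NJ / b <= NJ1 / (2*b) + E / (2*b) + L / b).
  { unfold Rdiv. apply Rmult_le_reg_r with (2*b); [lra|].
    replace ((NJ1 * / (2 * b) + E * / (2 * b) + L * / b) * (2 * b)) with (NJ1 + E + 2*L) by (field; lra).
    replace (NJ * / b * (2 * b)) with (2 * NJ) by (field; lra). lra. }
  assert (E / (2*b) <= a * (3/2)).
  { unfold Rdiv. apply Rmult_le_reg_r with (2*b); [lra|].
    replace (E * / (2 * b) * (2 * b)) with E by (field; lra). nra. }
  assert (L / b <= 3 * a * AA).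
  { unfold Rdiv. apply Rmult_le_reg_r with b; [lra|].
    replace (L * / b * b) with L by (field; lra). nra. }
  nra.
Qed.

Fixpoint rs {A} (f : A -> R) (l : list A) : R :=
  match l with [] => 0 | a :: l => f a + rs f l end.
Fixpoint sJ (f : nat -> R) (J : nat) : R :=
  match J with O => 0 | S J => sJ f J + f J end.

Lemma rs_plus {A} (f g : A -> R) l : rs (fun x => f x + g x) l = rs f l + rs g l.
Proof. induction l; simpl; lra. Qed.
Lemma rs_ext {A} (f g : A -> R) l : (forall x, In x l -> f x = g x) -> rs f l = rs g l.
Proof. induction l; simpl; intros H; [reflexivity|]. rewrite (H a), IHl; auto. Qed.
Lemma rs_le {A} (f g : A -> R) l : (forall x, In x l -> f x <= g x) -> rs f l <= rs g l.
Proof. induction l; simpl; intros H; [lra|]. pose proof (H a (or_introl eq_refl)).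
  pose proof (IHl (fun x h => H x (or_intror h))). lra. Qed.
Lemma rs_nonneg {A} (f : A -> R) l : (forall x, In x l -> 0 <= f x) -> 0 <= rs f l.
Proof. induction l; simpl; intros H; [lra|]. pose proof (H a (or_introl eq_refl)).
  pose proof (IHl (fun x h => H x (or_intror h))). lra. Qed.

Lemma rs_zero {A} (l : list A) : rs (fun _ => 0) l = 0.
Proof. induction l; simpl; lra. Qed.

Definition wt (e : piece * R * nat) : R := piece_area (fst (fst e)).

Lemma LL_gen bs (l : list (piece * R * nat)) j :
  (forall e, In e l -> 2 / 3 ^ (dep bs (snd e)) <= 6 * wt e) ->
  INR (sm (fun e : piece * R * nat => indb (Nat.eqb (dep bs (snd e)) j)) l) * (2 / 3 ^ j)
  <= 6 * rs (fun e => if Nat.eqb (dep bs (snd e)) j then wt e else 0) l.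
Proof.
  induction l as [|e l IH]; simpl; intros H; [lra|].
  rewrite plus_INR. specialize (IH (fun e h => H e (or_intror h))).
  pose proof (H e (or_introl eq_refl)).
  destruct (Nat.eqb_spec (dep bs (snd e)) j); simpl; [subst; lra|lra].
Qed.

Section Real.
Variable bs : list box.
Variable pl : list (piece * R * nat).
Hypothesis I : Inv bs pl.
Hypothesis F : Full bs pl (length bs).

Definition AA j := rs (fun e => if Nat.eqb (dep bs (snd e)) j then wt e else 0) pl.

Lemma w_bound e : In e pl -> 2 / 3 ^ (dep bs (snd e)) <= 6 * wt e.
Proof.
  destruct e as [[P q] i]. intros H. destruct (iPC _ _ I _ _ _ H) as [_ [_ [h _]]].
  unfold type_area in h. rewrite type_len in h. exact h.
Qed.

Lemma wt_pos e : In e pl -> 0 < wt e.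
Proof.
  intros H. pose proof (w_bound e H).
  assert (0 < 2 / 3 ^ (dep bs (snd e))) by (apply Rdiv_lt_0_compat; [lra|apply pow_lt; lra]). lra.
Qed.

Lemma AA_nonneg j : 0 <= AA j.
Proof. apply rs_nonneg. intros e He. destruct (Nat.eqb _ _); [pose proof (wt_pos e He)|]; lra. Qed.

Lemma LL_AA j : INR (LL bs pl j) * (2 / 3 ^ j) <= 6 * AA j.
Proof.
  unfold LL, AA. apply LL_gen. exact w_bound.
Qed.

Lemma sJ_AA J : sJ AA J <= rs wt pl.
Proof.
  assert (E : sJ AA J = rs (fun e => if Nat.ltb (dep bs (snd e)) J then wt e else 0) pl).
  { induction J as [|J IH]; simpl.
    - symmetry. etransitivity; [apply rs_ext with (g := fun _ => 0)|apply rs_zero].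
      intros e _. destruct (Nat.ltb_spec (dep bs (snd e)) 0); [lia|reflexivity].
    - rewrite IH. unfold AA. rewrite <- rs_plus. apply rs_ext. intros e _.
      destruct (Nat.ltb_spec (dep bs (snd e)) J); destruct (Nat.eqb_spec (dep bs (snd e)) J);
        destruct (Nat.ltb_spec (dep bs (snd e)) (S J)); try lra; lia. }
  rewrite E. apply rs_le. intros e He. pose proof (wt_pos e He). destruct (Nat.ltb _ _); lra.
Qed.

Lemma rec J : INR (NN bs 0) <= INR (NN bs J) / 2 ^ J + 3 * ((3/2) ^ J - 1) + 3 * (3/2) ^ J * sJ AA J.
Proof.
  induction J as [|J IH].
  - simpl. lra.
  - assert (Hb : 0 < 2 ^ J) by (apply pow_lt; lra).
    assert (Ha : 0 < (3/2) ^ J) by (apply pow_lt; lra).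
    assert (H3 : 3 ^ J = (3/2) ^ J * 2 ^ J).
    { rewrite <- Rpow_mult_distr. f_equal. lra. }
    pose proof (F1 bs pl I F J) as h1. apply le_INR in h1. rewrite !plus_INR, !mult_INR in h1.
    pose proof (EE_le bs pl I J) as h2. apply le_INR in h2. rewrite pow_INR in h2.
    simpl INR in h1, h2. replace (1+1+1) with 3 in h2 by lra.
    pose proof (LL_AA J) as h3. rewrite H3 in h3.
    simpl pow. simpl sJ.
    replace (3 / 2 * (3 / 2) ^ J) with ((3/2)^J * (3/2)) by ring.
    apply (step_real _ (INR (NN bs J)) _ (INR (EE bs J)) (INR (LL bs pl J))); auto.
    + apply AA_nonneg.
    + clear -I. induction J; simpl; [lra|]. pose proof (AA_nonneg J). lra.
    + simpl in h2. rewrite H3 in h2. lra.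
Qed.

End Real.


Lemma exp_le_mono x y : x <= y -> exp x <= exp y.
Proof. intros [H|H]; [left; apply exp_increasing; auto|subst; lra]. Qed.

Lemma ln_le_mono x y : 0 < x -> x <= y -> ln x <= ln y.
Proof. intros Hx [H|H]; [left; apply ln_increasing; auto|subst; lra]. Qed.

Lemma fold_Rmax_le l M : 0 <= M -> (forall x, In x l -> x <= M) -> fold_right Rmax 0 l <= M.
Proof.
  induction l; simpl; intros H0 H; auto. apply Rmax_lub; auto.
Qed.

Lemma fold_Rmax_ge l x : In x l -> x <= fold_right Rmax 0 l.
Proof.
  induction l; simpl; [tauto|]. intros [H|H]; subst.
  - apply Rmax_l.
  - eapply Rle_trans; [apply IHl; auto|apply Rmax_r].
Qed.

Lemma pow_bound (n J : nat) : (2 ^ J <= n)%nat ->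
  (3/2) ^ J <= Rpower (INR n) ((ln 3 - ln 2) / ln 2).
Proof.
  intros H. assert (Hn : 0 < INR n).
  { apply lt_0_INR. pose proof (Nat.pow_nonzero 2 J ltac:(lia)). lia. }
  assert (Hl2 : 0 < ln 2) by (rewrite <- ln_1; apply ln_increasing; lra).
  assert (Hl15 : ln (3/2) = ln 3 - ln 2).
  { unfold Rdiv. rewrite ln_mult, ln_Rinv by lra. ring. }
  assert (Hpos : 0 < ln 3 - ln 2).
  { rewrite <- Hl15, <- ln_1. apply ln_increasing; lra. }
  rewrite <- Rpower_pow by lra. unfold Rpower. apply exp_le_mono.
  rewrite Hl15.
  assert (HJ : INR J * ln 2 <= ln (INR n)).
  { rewrite <- ln_pow by lra. apply ln_le_mono; [apply pow_lt; lra|].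
    replace 2 with (INR 2) by (simpl; lra). rewrite <- pow_INR. apply le_INR. auto. }
  apply Rmult_le_reg_r with (ln 2); [auto|].
  replace ((ln 3 - ln 2) / ln 2 * ln (INR n) * ln 2) with ((ln 3 - ln 2) * ln (INR n)) by (field; lra).
  nra.
Qed.

Theorem lemma18 :
  exists (c : R) (N : nat), 0 < c /\
    forall (Ps : list piece) (st : state),
      (forall P, In P Ps -> admissible P) ->
      runs Ps st ->
      (N <= length Ps)%nat ->
      1 <= total_area Ps ->
      c * Rpower (INR (length Ps)) (1 - log2 3) / log2 (INR (length Ps))
        <= density st.
Proof.
  exists (1/12), 2%nat. split; [lra|].
  intros Ps st _ Hr HN HA.
  destruct (runs_ok _ _ Hr) as [I [Fu M]].
  set (bs := boxes st) in *. set (pl := placed st) in *.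
  assert (Hlen : length Ps = length pl) by (rewrite <- M, length_map; reflexivity).
  set (n := length Ps) in *.
  assert (Hnum : fold_right Rplus 0 (map (fun e : piece * R * nat => let '(P, _, _) := e in piece_area P) pl)
                 = total_area Ps).
  { unfold total_area. rewrite <- M. clear. induction pl as [|[[P q] i] l IH]; simpl; auto. rewrite IH. reflexivity. }
  assert (Hwt : rs wt pl = total_area Ps).
  { unfold total_area. rewrite <- M. clear. induction pl as [|[[P q] i] l IH]; simpl; auto. rewrite IH. reflexivity. }
  set (A := total_area Ps) in *.
  set (k := NN bs 0).
  assert (Hocc_le : occupied_length st <= 2 * INR k).
  { unfold occupied_length. fold pl. apply fold_Rmax_le.
    - pose proof (pos_INR k); lra.
    - intros x Hx. apply in_map_iff in Hx. destruct Hx as [[[P q] i] [Hx Hin]]. subst x.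
      destruct (iPC _ _ I _ _ _ Hin) as [Hi [Hc _]].
      pose proof (wt_pos bs pl I (P, q, i) Hin) as Hw. unfold wt in Hw; simpl in Hw.
      destruct (rightmost_in (piece_at P q)) as [y Hy]; [simpl; unfold piece_area in Hw; lra|].
      apply Hc in Hy. destruct (iRG _ _ I i _ _ Hi Hy). unfold k. lra. }
  assert (Hocc_pos : 0 < occupied_length st).
  { assert (Hex : exists P q i, In (P, q, i) pl).
    { clear -Hlen HN. destruct pl as [|[[P q] i] l]; [simpl in Hlen; lia|]. exists P, q, i; left; reflexivity. }
    destruct Hex as [P [q [i Hin]]].
    destruct (iPC _ _ I _ _ _ Hin) as [Hi [Hc _]].
    pose proof (wt_pos bs pl I (P, q, i) Hin) as Hw. unfold wt in Hw; simpl in Hw.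
    assert (Hq : 0 <= q).
    { assert (Hr0 : in_region (piece_at P q) q 0) by (unfold in_region, piece_at, piece_area in *; cbn; lra).
      apply Hc in Hr0. destruct (iRG _ _ I i _ _ Hi Hr0). lra. }
    eapply Rlt_le_trans; [|unfold occupied_length; fold pl; apply fold_Rmax_ge; apply in_map_iff; exists (P, q, i); split; [reflexivity|exact Hin]].
    unfold rightmost, piece_at; simpl. unfold piece_area in Hw. pose proof (Rmax_l 0 (wshear P)). lra. }
  assert (Hn0 : (0 < n)%nat) by lia.
  destruct (Nat.log2_spec n Hn0) as [HJ1 HJ2].
  set (J := Nat.log2 n) in *.
  pose proof (rec bs pl I Fu J) as Hrec.
  pose proof (sJ_AA bs pl I J) as HsJ. rewrite Hwt in HsJ.
  pose proof (NN_le bs pl I Fu J) as HNJ. rewrite <- Hlen in HNJ. fold n in HNJ.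
  assert (Hb : 0 < 2 ^ J) by (apply pow_lt; lra).
  assert (HNJ2 : INR (NN bs J) / 2 ^ J <= 2).
  { apply le_INR in HNJ. apply lt_INR in HJ2. rewrite pow_INR in HJ2. simpl INR in HJ2.
    replace (1+1) with 2 in HJ2 by lra. simpl in HJ2.
    unfold Rdiv. apply Rmult_le_reg_r with (2 ^ J); [auto|].
    rewrite Rmult_assoc, Rinv_l by lra. lra. }
  assert (Ha1 : 1 <= (3/2) ^ J) by (apply pow_R1_Rle; lra).
  pose proof (AA_nonneg bs pl I) as HAA.
  assert (HsJ0 : 0 <= sJ (AA bs pl) J) by (clear -HAA; induction J; simpl; [lra|pose proof (HAA J); lra]).
  set (a := (3/2) ^ J) in *.
  assert (Hk : INR k <= 6 * a * A).
  { assert (a * sJ (AA bs pl) J <= a * A) by (apply Rmult_le_compat_l; lra).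
    assert (a * 1 <= a * A) by (apply Rmult_le_compat_l; lra). unfold k. lra. }
  pose proof (pow_bound n J HJ1) as Hpb. fold a in Hpb.
  set (g := (ln 3 - ln 2) / ln 2) in *.
  set (Rn := Rpower (INR n) g) in *.
  assert (HRn : 0 < Rn) by (unfold Rn, Rpower; apply exp_pos).
  assert (Hexp : 1 - log2 3 = - g) by (unfold log2, g; field; apply ln_neq_0; lra).
  rewrite Hexp, Rpower_Ropp. fold Rn.
  assert (Hlg : 1 <= log2 (INR n)).
  { unfold log2. assert (Hl2 : 0 < ln 2) by (rewrite <- ln_1; apply ln_increasing; lra).
    apply Rmult_le_reg_r with (ln 2); [auto|]. unfold Rdiv. rewrite Rmult_assoc, Rinv_l by lra.
    rewrite Rmult_1_l, Rmult_1_r. apply ln_le_mono; [lra|].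
    replace 2 with (INR 2) by (simpl; lra). apply le_INR. lia. }
  unfold density. fold pl. rewrite Hnum. fold A. rewrite Rmult_1_r.
  assert (Hocc : occupied_length st <= 12 * A * Rn) by nra.
  set (occ := occupied_length st) in *.
  apply Rle_trans with (1/12 * / Rn).
  - unfold Rdiv. rewrite <- (Rmult_1_r (1 * / 12 * / Rn)) at 2.
    assert (0 < / log2 (INR n) <= 1).
    { split; [apply Rinv_0_lt_compat; lra|]. rewrite <- Rinv_1. apply Rinv_le_contravar; lra. }
    assert (0 < / Rn) by (apply Rinv_0_lt_compat; lra).
    nra.
  - apply Rmult_le_reg_r with occ; [auto|].
    replace (A / occ * occ) with A by (field; lra).
    apply Rmult_le_reg_r with Rn; [auto|].
    replace (1 / 12 * / Rn * occ * Rn) with (occ / 12) by (field; lra). nra.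
Qed.
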